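(* Let $d \geq 2$ be an integer and let $G$ be a standard Gaussian random vector in $\mathbb{R}^d$ (mean zero, identity covariance). Then \[ \mathbb{P}(\|G\| > \sqrt{d}) \geq \frac{1}{33} \quad\text{and}\quad \mathbb{P}(\|G\| > \sqrt{d+2}) \geq \frac{1}{397}. \]
   Context: $\|\cdot\|$ denotes the standard Euclidean norm on $\mathbb{R}^d$. *)

(* Defs.v *)
(* No measure theory is installed, so the
   Gaussian probability of an (open) set is expressed as the iterated
   improper Riemann integral of its indicator against the standard Gaussian
   density on R^d (points of R^d are lists of length d). *)
From Stdlib Require Import Reals Lra List.
Open Scope R_scope.

Definition sqnorm (v : list R) : R := fold_right (fun x s => x * x + s) 0 v.
Definition enorm (v : list R) : R := sqrt (sqnorm v).

Definition gauss_density (d : nat) (v : list R) : R :=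
  exp (- sqnorm v / 2) / (sqrt (2 * PI)) ^ d.

Definition improper_int (f : R -> R) (l : R) : Prop :=
  (forall a b : R, inhabited (Riemann_integrable f a b)) /\
  (forall eps : R, eps > 0 -> exists M : R, forall a b : R,
      a <= - M -> M <= b ->
      exists pr : Riemann_integrable f a b, Rabs (RiemannInt pr - l) < eps).

Fixpoint iter_int (n : nat) (f : list R -> R) (l : R) : Prop :=
  match n with
  | O => f nil = l
  | S m => exists g : R -> R,
      (forall x : R, iter_int m (fun v => f (x :: v)) (g x)) /\ improper_int g l
  end.

Definition gauss_tail (d : nat) (r p : R) : Prop :=
  iter_int d (fun v => if Rlt_dec r (enorm v) then gauss_density d v else 0) p.

(* Main.v *)
Require Import Defs.
From Coquelicot Require Import Coquelicot.
From Stdlib Require Import Reals Lra Psatz ZArith Lia List.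
Open Scope R_scope.


Lemma exd_cont (f:R->R) x : ex_derive f x -> continuous f x.
Proof. intros H. exact (ex_derive_continuous (K:=R_AbsRing) (V:=R_NormedModule) f x H). Qed.

Lemma exc (f:R->R) a b : (forall z, Rmin a b <= z <= Rmax a b -> continuous f z) -> ex_RInt f a b.
Proof. intros H. exact (ex_RInt_continuous (V:=R_CompleteNormedModule) f a b H). Qed.

Lemma Chasles_R (f:R->R) a b c : ex_RInt f a b -> ex_RInt f b c -> RInt f a b + RInt f b c = RInt f a c.
Proof. intros H H0. exact (RInt_Chasles (V:=R_CompleteNormedModule) f a b c H H0). Qed.

Lemma RInt_scal_R (f:R->R) a b l : ex_RInt f a b -> RInt (fun x => l * f x) a b = l * RInt f a b.
Proof. intros H. exact (RInt_scal (V:=R_CompleteNormedModule) f a b l H). Qed.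

Lemma RInt_plus_R (f g:R->R) a b : ex_RInt f a b -> ex_RInt g a b -> RInt (fun x => f x + g x) a b = RInt f a b + RInt g a b.
Proof. intros H H0. exact (RInt_plus (V:=R_CompleteNormedModule) f g a b H H0). Qed.

Lemma RInt_swap_R (f:R->R) a b : ex_RInt f a b -> RInt f b a = - RInt f a b.
Proof. intros H. symmetry. exact (opp_RInt_swap (V:=R_CompleteNormedModule) f a b H). Qed.

Lemma comp_lin_R (f:R->R) u v a b : ex_RInt f (u*a+v) (u*b+v) ->
  RInt (fun y => u * f (u*y+v)) a b = RInt f (u*a+v) (u*b+v).
Proof. intros H. exact (RInt_comp_lin (V:=R_CompleteNormedModule) f u v a b H). Qed.

Lemma RInt_ext_R (f g : R->R) a b : (forall x, Rmin a b < x < Rmax a b -> @eq R (f x) (g x)) -> @eq R (RInt f a b) (RInt g a b).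
Proof. intros H. exact (RInt_ext (V:=R_CompleteNormedModule) f g a b H). Qed.

Definition eg (t:R) := exp (-(t*t)).

Lemma eg_cont t : continuous eg t.
Proof. apply exd_cont; unfold eg; auto_derive; auto. Qed.

Lemma eg_ex a b : ex_RInt eg a b.
Proof. apply exc; intros; apply eg_cont. Qed.

Definition kf (u t : R) := exp (-(u*u)*(1+t*t)) / (1+t*t).
Definition dk (u t : R) := -2*u*exp (-(u*u)*(1+t*t)).

Lemma kf_der u t : is_derive (fun z => kf z t) u (dk u t).
Proof.
  unfold kf, dk. auto_derive.
  - assert (0 <= t*t) by nra. lra.
  - field. assert (0 <= t*t) by nra. lra.
Qed.

Lemma dk_cont u t : continuity_2d_pt dk u t.
Proof.
  unfold dk.
  apply continuity_2d_pt_mult.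
  - apply continuity_2d_pt_mult. apply continuity_2d_pt_const. apply continuity_2d_pt_id1.
  - apply continuity_1d_2d_pt_comp with (f := exp) (g := fun u v => -(u*u)*(1+v*v)).
    + apply derivable_continuous_pt. apply derivable_pt_exp.
    + apply continuity_2d_pt_mult.
      * apply continuity_2d_pt_opp. apply continuity_2d_pt_mult; apply continuity_2d_pt_id1.
      * apply continuity_2d_pt_plus. apply continuity_2d_pt_const.
        apply continuity_2d_pt_mult; apply continuity_2d_pt_id2.
Qed.

Lemma kf_cont u t : continuous (kf u) t.
Proof. apply exd_cont; unfold kf; auto_derive.
  assert (0 <= t*t) by nra. lra. Qed.

Lemma dk_cont1 u t : continuous (dk u) t.
Proof. apply exd_cont; unfold dk; auto_derive; auto. Qed.

Definition K (x:R) : R := RInt (kf x) 0 1.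

Lemma K_der x : is_derive K x (RInt (dk x) 0 1).
Proof.
  unfold K.
  replace (RInt (dk x) 0 1) with (RInt (fun t => Derive (fun u => kf u t) x) 0 1).
  2:{ apply RInt_ext. intros; apply is_derive_unique, kf_der. }
  apply (is_derive_RInt_param kf 0 1 x).
  - apply filter_forall. intros; eexists; apply kf_der.
  - intros. eapply continuity_2d_pt_ext. 2: apply (dk_cont x t).
    intros; simpl. symmetry; apply is_derive_unique, kf_der.
  - apply filter_forall. intros; apply exc; intros; apply kf_cont.
Qed.

Definition G (x:R) : R := RInt eg 0 x.

Lemma G_der x : is_derive G x (eg x).
Proof.
  apply (is_derive_RInt (V:=R_NormedModule) eg G 0 x). apply filter_forall. intros y.
  apply (RInt_correct (V:=R_CompleteNormedModule)), eg_ex. apply eg_cont.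
Qed.

Lemma dk_int x : RInt (dk x) 0 1 = -2 * eg x * G x.
Proof.
  unfold G.
  pose proof (RInt_comp_lin (V:=R_CompleteNormedModule) eg x 0 0 1 (eg_ex _ _)) as H.
  replace (x*0+0) with 0 in H by ring. replace (x*1+0) with x in H by ring.
  rewrite <- H.
  replace (-2*eg x * RInt (fun y => scal x (eg (x*y+0))) 0 1)
    with (scal (-2*eg x) (RInt (fun y => scal x (eg (x*y+0))) 0 1)) by reflexivity.
  rewrite <- (RInt_scal (V:=R_CompleteNormedModule)).
  2:{ apply exc; intros. apply exd_cont.
      unfold eg, scal; simpl; unfold mult; simpl. auto_derive; auto. }
  apply RInt_ext; intros. unfold dk, eg, scal; simpl; unfold mult; simpl.
  replace (- (x * x) * (1 + x0 * x0)) with (- (x * x) + - ((x * x0 + 0) * (x * x0 + 0))) by ring.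
  rewrite exp_plus. ring.
Qed.

Definition hh x := G x * G x + K x.

Lemma hh_der x : derivable_pt_lim hh x 0.
Proof.
  apply is_derive_Reals.
  replace 0 with (eg x * G x + G x * eg x + RInt (dk x) 0 1).
  2:{ rewrite dk_int. ring. }
  unfold hh. apply (is_derive_plus (K:=R_AbsRing) (V:=R_NormedModule)).
  apply (is_derive_mult (K:=R_AbsRing)). apply G_der. apply G_der.
  intros; apply Rmult_comm.
  apply K_der.
Qed.

Lemma hh_const x : hh x = hh 0.
Proof.
  destruct (MVT_abs hh (fun _ => 0) 0 x) as [c [Hc _]].
  intros; apply hh_der.
  rewrite Rabs_R0, Rmult_0_l in Hc.
  assert (hh x - hh 0 = 0) by (destruct (Req_dec (hh x - hh 0) 0); auto; apply Rabs_no_R0 in H; lra).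
  lra.
Qed.

Lemma RInt_const_R (c a b : R) : RInt (fun _ => c) a b = (b - a) * c.
Proof. rewrite RInt_const. reflexivity. Qed.

Lemma hh0 : hh 0 = PI / 4.
Proof.
  unfold hh, G, K. rewrite RInt_point. unfold zero; simpl.
  rewrite <- atan_1.
  replace (RInt (kf 0) 0 1) with (RInt (fun t => / (1 + t*t)) 0 1).
  2:{ apply RInt_ext; intros. unfold kf. replace (- (0*0) * (1 + x*x)) with 0 by ring.
      rewrite exp_0. unfold Rdiv. rewrite Rmult_1_l. reflexivity. }
  replace (atan 1) with (atan 1 - atan 0) by (rewrite atan_0; ring).
  rewrite Rmult_0_l, Rplus_0_l.
  apply is_RInt_unique.
  apply (is_RInt_derive (V:=R_CompleteNormedModule) atan (fun t => / (1 + t*t))).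
  - intros. pose proof (is_derive_atan x). unfold Rsqr in H0. exact H0.
  - intros. apply exd_cont. auto_derive. assert (0 <= x*x) by nra. lra.
Qed.

Lemma RInt_lower (f:R->R) a b m : a <= b -> ex_RInt f a b ->
  (forall x, a < x < b -> m <= f x) -> (b-a)*m <= RInt f a b.
Proof. intros. rewrite <- RInt_const_R. apply RInt_le; auto. apply ex_RInt_const. Qed.

Lemma RInt_upper (f:R->R) a b m : a <= b -> ex_RInt f a b ->
  (forall x, a < x < b -> f x <= m) -> RInt f a b <= (b-a)*m.
Proof. intros. rewrite <- RInt_const_R. apply RInt_le; auto. apply ex_RInt_const. Qed.

Lemma K_bounds x : 0 <= K x <= eg x.
Proof.
  unfold K.
  assert (E: forall a b, ex_RInt (kf a) 0 b) by (intros; apply exc; intros; apply kf_cont).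
  split.
  - apply Rle_trans with ((1-0)*0). lra. apply RInt_lower. lra. apply E.
    intros t Ht. unfold kf. apply Rlt_le, Rdiv_lt_0_compat. apply exp_pos.
    assert (0 <= t*t) by nra. lra.
  - apply Rle_trans with ((1-0)*eg x). 2: lra. apply RInt_upper. lra. apply E.
    intros t Ht. unfold kf, eg.
    assert (0 <= t*t) by nra.
    assert (exp (- (x * x) * (1 + t * t)) <= exp (-(x*x))).
    { destruct (Req_dec (-(x*x)*(1+t*t)) (-(x*x))) as [e|e]. rewrite e; lra.
      apply Rlt_le, exp_increasing. assert (0 <= x*x) by nra. nra. }
    apply Rle_trans with (exp (- (x * x) * (1 + t * t))).
    + unfold Rdiv. rewrite <- (Rmult_1_r (exp _)) at 2. apply Rmult_le_compat_l.
      apply Rlt_le, exp_pos. rewrite <- Rinv_1. apply Rinv_le_contravar; lra.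
    + exact H0.
Qed.

Lemma G_nonneg x : 0 <= x -> 0 <= G x.
Proof.
  intros Hx. unfold G. apply Rle_trans with ((x-0)*0). lra. apply RInt_lower. lra. apply eg_ex.
  intros t _. unfold eg. apply Rlt_le, exp_pos.
Qed.

Definition sG := sqrt PI / 2.

Lemma sG_pos : 0 < sG.
Proof. unfold sG. assert (0 < sqrt PI) by (apply sqrt_lt_R0, PI_RGT_0). lra. Qed.

Lemma sG_sq : sG * sG = PI / 4.
Proof. unfold sG. replace (sqrt PI / 2 * (sqrt PI / 2)) with (sqrt PI * sqrt PI / 4) by field.
  rewrite sqrt_sqrt. auto. apply Rlt_le, PI_RGT_0. Qed.

Lemma G_close x : 0 <= x -> Rabs (G x - sG) <= eg x / sG.
Proof.
  intros Hx. pose proof (hh_const x) as H. rewrite hh0 in H. unfold hh in H.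
  pose proof (K_bounds x). pose proof (G_nonneg x Hx). pose proof sG_pos. pose proof sG_sq.
  assert (Hd : G x - sG = - K x / (G x + sG)).
  { apply (Rmult_eq_reg_r (G x + sG)). unfold Rdiv. rewrite Rmult_assoc, Rinv_l by lra. nra. lra. }
  rewrite Hd. unfold Rdiv. rewrite Rabs_mult, Rabs_Ropp, Rabs_Rinv by lra.
  rewrite (Rabs_right (K x)) by lra. rewrite (Rabs_right (G x + sG)) by lra.
  apply Rmult_le_compat. lra. left; apply Rinv_0_lt_compat; lra. lra.
  apply Rinv_le_contravar; lra.
Qed.

Definition phi (x:R) : R := exp (-(x*x)/2) / sqrt (2*PI).

Lemma phi_pos x : 0 < phi x.
Proof. unfold phi. apply Rdiv_lt_0_compat. apply exp_pos. apply sqrt_lt_R0. pose proof PI_RGT_0; lra. Qed.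

Lemma phi_cont x : continuous phi x.
Proof. apply exd_cont. unfold phi. auto_derive. auto. Qed.

Lemma phi_ex a b : ex_RInt phi a b.
Proof. apply exc; intros; apply phi_cont. Qed.

Lemma G_odd y : G (-y) = - G y.
Proof.
  unfold G.
  pose proof (RInt_comp_lin (V:=R_CompleteNormedModule) eg (-1) 0 0 y (eg_ex _ _)) as H.
  replace (-1*0+0) with 0 in H by ring. replace (-1*y+0) with (-y) in H by ring.
  rewrite <- H.
  assert (Hs : forall z:R, scal (-1) z = - z) by (intros; unfold scal; simpl; unfold mult; simpl; ring).
  transitivity (scal (-1) (RInt eg 0 y)). 2: apply Hs.
  rewrite <- (RInt_scal (V:=R_CompleteNormedModule)). 2: apply eg_ex.
  apply RInt_ext; intros. f_equal. unfold eg. f_equal. ring.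
Qed.

Lemma sqrt2_pos : 0 < sqrt 2.
Proof. apply sqrt_lt_R0; lra. Qed.

Lemma phi_RInt a b : RInt phi a b = (G (b / sqrt 2) - G (a / sqrt 2)) / sqrt PI.
Proof.
  pose proof sqrt2_pos as H2.
  assert (HP : 0 < sqrt PI) by (apply sqrt_lt_R0, PI_RGT_0).
  set (u := / sqrt 2).
  pose proof (comp_lin_R eg u 0 a b (eg_ex _ _)) as H.
  replace (u*a+0) with (a / sqrt 2) in H by (unfold u, Rdiv; ring).
  replace (u*b+0) with (b / sqrt 2) in H by (unfold u, Rdiv; ring).
  assert (HG : @eq R (RInt eg (a / sqrt 2) (b / sqrt 2)) (G (b / sqrt 2) - G (a / sqrt 2))).
  { pose proof (Chasles_R eg 0 (a / sqrt 2) (b / sqrt 2) (eg_ex _ _) (eg_ex _ _)) as HC.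
    unfold G. lra. }
  rewrite <- HG, <- H.
  unfold Rdiv at 1. rewrite Rmult_comm. rewrite <- RInt_scal_R.
  2:{ apply exc; intros; apply exd_cont. unfold eg. auto_derive; auto. }
  apply RInt_ext_R; intros. unfold phi, eg, u.
  assert (E1 : sqrt (2 * PI) = sqrt 2 * sqrt PI) by (apply sqrt_mult; pose proof PI_RGT_0; lra).
  assert (E2 : sqrt 2 * sqrt 2 = 2) by (apply sqrt_sqrt; lra).
  rewrite E1. replace (- ((/ sqrt 2 * x + 0) * (/ sqrt 2 * x + 0))) with (- (x * x) / 2).
  field; lra.
  field_simplify; try lra. replace (sqrt 2 ^ 2) with 2 by (simpl; rewrite Rmult_1_r; symmetry; exact E2). reflexivity.
Qed.

Definition ImpInt (f:R->R) (l:R) :=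
  (forall a b, ex_RInt f a b) /\
  (forall eps, eps > 0 -> exists M, forall a b, a <= -M -> M <= b -> Rabs (RInt f a b - l) < eps).

Lemma eg_small y : 0 <= y -> eg y <= / (1 + y*y).
Proof.
  intros Hy. unfold eg. rewrite exp_Ropp. apply Rinv_le_contravar. nra.
  destruct (Req_dec y 0). subst. rewrite Rmult_0_l, exp_0. lra.
  left. apply exp_ineq1. nra.
Qed.

Lemma phi_Imp : ImpInt phi 1.
Proof.
  split. apply phi_ex.
  intros eps Heps.
  pose proof sqrt2_pos as H2.
  assert (HP : 0 < sqrt PI) by (apply sqrt_lt_R0, PI_RGT_0).
  pose proof sG_pos as HsG.
  set (C := 2 / (sG * sqrt PI)).
  assert (HC : 0 < C) by (unfold C; apply Rdiv_lt_0_compat; nra).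
  exists (sqrt 2 * (2 + C / eps)). intros a b Ha Hb.
  assert (Hce : 0 < C/eps) by (apply Rdiv_lt_0_compat; lra).
  set (M' := 2 + C/eps).
  assert (HM2 : 2 <= M') by (unfold M'; lra).
  assert (Hb' : M' <= b / sqrt 2) by (apply Rle_div_r; [lra| unfold M' in *; lra]).
  assert (Ha' : M' <= - a / sqrt 2) by (apply Rle_div_r; [lra| unfold M' in *; lra]).
  rewrite phi_RInt.
  replace (a / sqrt 2) with (- (-a / sqrt 2)) by (unfold Rdiv; ring). rewrite G_odd.
  set (y1 := b / sqrt 2) in *. set (y2 := -a / sqrt 2) in *.
  assert (E : 1 = 2 * sG / sqrt PI) by (unfold sG; field; lra).
  rewrite E.
  replace ((G y1 - - G y2) / sqrt PI - 2 * sG / sqrt PI) with (((G y1 - sG) + (G y2 - sG)) / sqrt PI) by (field; lra).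
  unfold Rdiv at 1. rewrite Rabs_mult, (Rabs_right (/ sqrt PI)) by (left; apply Rinv_0_lt_compat; lra).
  assert (B1 : Rabs (G y1 - sG) <= / (1 + M' * M') / sG).
  { apply Rle_trans with (eg y1 / sG). apply G_close. lra.
    unfold Rdiv; apply Rmult_le_compat_r. left; apply Rinv_0_lt_compat; lra.
    apply Rle_trans with (/ (1 + y1*y1)). apply eg_small; lra.
    apply Rinv_le_contravar. nra. nra. }
  assert (B2 : Rabs (G y2 - sG) <= / (1 + M' * M') / sG).
  { apply Rle_trans with (eg y2 / sG). apply G_close. lra.
    unfold Rdiv; apply Rmult_le_compat_r. left; apply Rinv_0_lt_compat; lra.
    apply Rle_trans with (/ (1 + y2*y2)). apply eg_small; lra.
    apply Rinv_le_contravar. nra. nra. }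
  pose proof (Rabs_triang (G y1 - sG) (G y2 - sG)).
  assert (HM : C / eps < 1 + M' * M') by (unfold M'; nra).
  assert (Hx : 2 * (/ (1 + M' * M') / sG) * / sqrt PI < eps).
  { replace (2 * (/ (1 + M' * M') / sG) * / sqrt PI) with (C / (1 + M'*M')) by (unfold C; field; repeat split; nra).
    apply (Rmult_lt_reg_r (1 + M'*M')). nra. unfold Rdiv. rewrite Rmult_assoc, Rinv_l by nra.
    apply (Rmult_lt_reg_r (/eps)). apply Rinv_0_lt_compat; lra.
    replace (eps * (1 + M' * M') * / eps) with (1 + M'*M') by (field; lra). unfold Rdiv in HM. lra. }
  apply Rle_lt_trans with (2 * (/ (1 + M' * M') / sG) * / sqrt PI); [|exact Hx].
  apply Rmult_le_compat_r. left; apply Rinv_0_lt_compat; lra. lra.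
Qed.


Lemma Rabs_le_inv x y : Rabs x <= y -> -y <= x <= y.
Proof. unfold Rabs; destruct (Rcase_abs x); intros; lra. Qed.

Lemma ImpInt_ext f g l : (forall x, f x = g x) -> ImpInt f l -> ImpInt g l.
Proof.
  intros E [H1 H2]. split.
  - intros a b. apply (ex_RInt_ext (V:=R_NormedModule) f). intros; apply E. apply H1.
  - intros eps Heps. destruct (H2 eps Heps) as [M HM]. exists M. intros a b Ha Hb.
    rewrite <- (RInt_ext_R f g). apply HM; auto. intros; apply E.
Qed.

Lemma ex_scal_R (f:R->R) k a b : ex_RInt f a b -> ex_RInt (fun x => k * f x) a b.
Proof. intros H. exact (ex_RInt_scal (V:=R_NormedModule) f a b k H). Qed.

Lemma ex_plus_R (f g:R->R) a b : ex_RInt f a b -> ex_RInt g a b -> ex_RInt (fun x => f x + g x) a b.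
Proof. intros H H0. exact (ex_RInt_plus (V:=R_NormedModule) f g a b H H0). Qed.

Lemma ImpInt_scal f l k : ImpInt f l -> ImpInt (fun x => k * f x) (k * l).
Proof.
  intros [H1 H2]. split.
  - intros; apply ex_scal_R, H1.
  - intros eps Heps.
    destruct (H2 (eps / (Rabs k + 1))) as [M HM].
    { apply Rdiv_lt_0_compat; auto. pose proof (Rabs_pos k); lra. }
    exists M. intros a b Ha Hb. rewrite RInt_scal_R by apply H1.
    replace (k * RInt f a b - k * l) with (k * (RInt f a b - l)) by ring.
    rewrite Rabs_mult. pose proof (HM a b Ha Hb). pose proof (Rabs_pos k).
    pose proof (Rabs_pos (RInt f a b - l)).
    apply Rle_lt_trans with ((Rabs k + 1) * Rabs (RInt f a b - l)). nra.
    apply (Rmult_lt_reg_l (/ (Rabs k + 1))). apply Rinv_0_lt_compat; lra.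
    rewrite <- Rmult_assoc, Rinv_l by lra. unfold Rdiv in H. lra.
Qed.

Lemma ImpInt_plus f g l1 l2 : ImpInt f l1 -> ImpInt g l2 -> ImpInt (fun x => f x + g x) (l1 + l2).
Proof.
  intros [H1 H2] [G1 G2]. split.
  - intros; apply ex_plus_R; auto.
  - intros eps Heps.
    destruct (H2 (eps/2)) as [M1 HM1]. lra. destruct (G2 (eps/2)) as [M2 HM2]. lra.
    exists (Rmax M1 M2). intros a b Ha Hb. rewrite RInt_plus_R by auto.
    pose proof (Rmax_l M1 M2). pose proof (Rmax_r M1 M2).
    pose proof (HM1 a b ltac:(lra) ltac:(lra)). pose proof (HM2 a b ltac:(lra) ltac:(lra)).
    pose proof (Rabs_triang (RInt f a b - l1) (RInt g a b - l2)).
    replace (RInt f a b + RInt g a b - (l1 + l2)) with ((RInt f a b - l1) + (RInt g a b - l2)) by ring.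
    lra.
Qed.

Lemma ImpInt_le f g l1 l2 : ImpInt f l1 -> ImpInt g l2 -> (forall x, f x <= g x) -> l1 <= l2.
Proof.
  intros [H1 H2] [G1 G2] Hle.
  apply Rnot_lt_le; intros Hlt.
  set (eps := (l1 - l2)/2).
  destruct (H2 eps) as [M1 HM1]. unfold eps; lra. destruct (G2 eps) as [M2 HM2]. unfold eps; lra.
  set (M := Rmax (Rmax M1 M2) 0).
  pose proof (Rmax_l (Rmax M1 M2) 0). pose proof (Rmax_r (Rmax M1 M2) 0).
  pose proof (Rmax_l M1 M2). pose proof (Rmax_r M1 M2).
  pose proof (HM1 (-M) M ltac:(unfold M in *; lra) ltac:(unfold M in *; lra)) as A1.
  pose proof (HM2 (-M) M ltac:(unfold M in *; lra) ltac:(unfold M in *; lra)) as A2.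
  assert (RInt f (-M) M <= RInt g (-M) M).
  { apply RInt_le. unfold M in *; lra. auto. auto. intros; auto. }
  apply Rabs_def2 in A1. apply Rabs_def2 in A2. unfold eps in *. lra.
Qed.

Lemma ImpInt_unique f l1 l2 : ImpInt f l1 -> ImpInt f l2 -> l1 = l2.
Proof. intros. apply Rle_antisym; eapply ImpInt_le; eauto; intros; lra. Qed.

Lemma nat_above M : exists N : nat, M <= INR N.
Proof.
  destruct (archimed M) as [H1 _].
  destruct (Z_le_gt_dec 0 (up M))%Z as [Hz|Hz].
  - exists (Z.to_nat (up M)). rewrite INR_IZR_INZ, Z2Nat.id by lia. lra.
  - exists 0%nat. simpl. assert (Hz2 : (up M < 0)%Z) by lia. apply IZR_lt in Hz2. lra.
Qed.

Lemma RInt_opp_le (f:R->R) a b : a <= b -> ex_RInt f a b -> ex_RInt phi a b ->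
  (forall x, Rabs (f x) <= phi x) -> Rabs (RInt f a b) <= RInt phi a b.
Proof.
  intros Hab Hf Hp Hb. apply Rabs_le. split.
  - assert (E : RInt (fun x => -1 * phi x) a b = -1 * RInt phi a b) by (apply RInt_scal_R; auto).
    apply Rle_trans with (RInt (fun x => -1 * phi x) a b). rewrite E; lra.
    apply RInt_le; auto. apply ex_scal_R; auto. intros x _. pose proof (Hb x). apply Rabs_le_inv in H. lra.
  - apply RInt_le; auto. intros x _. pose proof (Hb x). apply Rabs_le_inv in H. lra.
Qed.

Lemma dom_cauchy f : (forall a b, ex_RInt f a b) -> (forall x, Rabs (f x) <= phi x) ->
  forall eps, eps > 0 -> exists M, 0 <= M /\ forall a1 b1 a2 b2, a1 <= -M -> M <= b1 -> a2 <= -M -> M <= b2 ->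
    Rabs (RInt f a1 b1 - RInt f a2 b2) < eps.
Proof.
  intros Hex Hb eps Heps.
  destruct phi_Imp as [_ HP].
  destruct (HP (eps/4)) as [M HM]. lra.
  exists (Rmax M 0). split. apply Rmax_r.
  pose proof (Rmax_l M 0). pose proof (Rmax_r M 0).
  assert (key : forall a b a' b', a <= a' -> a' <= - Rmax M 0 -> Rmax M 0 <= b' -> b' <= b ->
     Rabs (RInt f a b - RInt f a' b') < eps / 2).
  { intros a b a' b' h1 h2 h3 h4.
    pose proof (Chasles_R f a a' b (Hex _ _) (Hex _ _)) as E1.
    pose proof (Chasles_R f a' b' b (Hex _ _) (Hex _ _)) as E2.
    pose proof (Chasles_R phi a a' b (phi_ex _ _) (phi_ex _ _)) as E3.
    pose proof (Chasles_R phi a' b' b (phi_ex _ _) (phi_ex _ _)) as E4.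
    pose proof (HM a b ltac:(lra) ltac:(lra)) as P1. pose proof (HM a' b' ltac:(lra) ltac:(lra)) as P2.
    pose proof (RInt_opp_le f a a' h1 (Hex _ _) (phi_ex _ _) Hb) as Q1.
    pose proof (RInt_opp_le f b' b h4 (Hex _ _) (phi_ex _ _) Hb) as Q2.
    apply Rabs_def2 in P1. apply Rabs_def2 in P2. apply Rabs_le_inv in Q1. apply Rabs_le_inv in Q2.
    apply Rabs_def1; lra. }
  intros a1 b1 a2 b2 h1 h2 h3 h4.
  pose proof (key (Rmin a1 a2) (Rmax b1 b2) a1 b1 (Rmin_l _ _) h1 h2 (Rmax_l _ _)) as K1.
  pose proof (key (Rmin a1 a2) (Rmax b1 b2) a2 b2 (Rmin_r _ _) h3 h4 (Rmax_r _ _)) as K2.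
  apply Rabs_def2 in K1. apply Rabs_def2 in K2. apply Rabs_def1; lra.
Qed.

Definition ILim (f : R -> R) : R := real (Lim_seq (fun k => RInt f (- INR k) (INR k))).

Lemma ImpInt_exist f : (forall a b, ex_RInt f a b) -> (forall x, Rabs (f x) <= phi x) -> ImpInt f (ILim f).
Proof.
  intros Hex Hb.
  set (u := fun k => RInt f (- INR k) (INR k)).
  assert (Hc : Cauchy_crit u).
  { intros eps Heps. destruct (dom_cauchy f Hex Hb eps Heps) as [M [HM0 HM]].
    destruct (nat_above M) as [N HN]. exists N. intros n m Hn Hm. unfold R_dist, u.
    apply le_INR in Hn. apply le_INR in Hm. apply HM; lra. }
  destruct (R_complete u Hc) as [l Hl].
  assert (HL : ILim f = l).
  { unfold ILim. fold u. rewrite (is_lim_seq_unique u l). reflexivity.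
    apply is_lim_seq_Reals. exact Hl. }
  rewrite HL. split; auto.
  intros eps Heps.
  destruct (dom_cauchy f Hex Hb (eps/2)) as [M [HM0 HM]]. lra.
  exists M. intros a b Ha Hb'.
  destruct (Hl (eps/2)) as [N1 HN1]. lra.
  destruct (nat_above M) as [N2 HN2].
  set (k := max N1 N2).
  assert (INR N2 <= INR k) by (apply le_INR, Nat.le_max_r).
  pose proof (HN1 k (Nat.le_max_l _ _)). unfold R_dist in H0.
  pose proof (HM a b (- INR k) (INR k) Ha Hb' ltac:(lra) ltac:(lra)).
  unfold u in H0.
  pose proof (Rabs_triang (RInt f a b - RInt f (- INR k) (INR k)) (RInt f (- INR k) (INR k) - l)).
  replace (RInt f a b - RInt f (- INR k) (INR k) + (RInt f (- INR k) (INR k) - l)) with (RInt f a b - l) in H2 by ring.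
  lra.
Qed.


Lemma cpt_cont (f:R->R) x : continuity_pt f x -> continuous f x.
Proof. intros H. apply continuity_pt_filterlim in H. exact H. Qed.

Lemma ex_sub (f:R->R) N a b : ex_RInt f (-N) N -> Rabs a <= N -> Rabs b <= N -> ex_RInt f a b.
Proof.
  intros H Ha Hb. apply Rabs_le_inv in Ha. apply Rabs_le_inv in Hb.
  assert (K : forall a b, -N <= a <= N -> -N <= b <= N -> a <= b -> ex_RInt f a b).
  { intros u v Hu Hv Huv.
    apply (ex_RInt_Chasles_2 (V:=R_CompleteNormedModule) f (-N)). lra.
    apply (ex_RInt_Chasles_1 (V:=R_CompleteNormedModule) f (-N) v N). lra. exact H. }
  destruct (Rle_dec a b). apply K; lra.
  apply (ex_RInt_swap (V:=R_NormedModule)). apply K; lra.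
Qed.

Lemma ex_chas (f:R->R) a b c : ex_RInt f a b -> ex_RInt f b c -> ex_RInt f a c.
Proof. intros H H0. exact (ex_RInt_Chasles (V:=R_NormedModule) f a b c H H0). Qed.

Lemma ex_ext (f g:R->R) a b : (forall x, Rmin a b < x < Rmax a b -> f x = g x) -> ex_RInt f a b -> ex_RInt g a b.
Proof. intros H H0. exact (ex_RInt_ext (V:=R_NormedModule) f g a b H H0). Qed.

Lemma ex_zero a b : ex_RInt (fun _ => 0) a b.
Proof. apply (ex_RInt_const (V:=R_NormedModule)). Qed.

Lemma RInt_zero a b : @eq R (RInt (fun _ => 0) a b) 0.
Proof. rewrite RInt_const_R. apply Rmult_0_r. Qed.

Section WithR.
Variable r : R.
Hypothesis r_nn : 0 <= r.

Definition ind (t : R) : R := if Rlt_dec r (sqrt t) then 1 else 0.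

Lemma ind_iff t : r < sqrt t <-> r * r < t.
Proof.
  split; intros H.
  - destruct (Rle_dec t 0). rewrite sqrt_neg_0 in H by auto. lra.
    rewrite <- (sqrt_sqrt t) by lra. pose proof (sqrt_pos t). nra.
  - rewrite <- (sqrt_square r) by auto. apply sqrt_lt_1_alt. nra.
Qed.

Lemma ind_1 t : r * r < t -> ind t = 1.
Proof. intros H. unfold ind. destruct (Rlt_dec r (sqrt t)); auto. exfalso. apply n, ind_iff, H. Qed.

Lemma ind_0 t : t <= r * r -> ind t = 0.
Proof. intros H. unfold ind. destruct (Rlt_dec r (sqrt t)); auto. apply ind_iff in r0. lra. Qed.

Lemma ind_bounds t : 0 <= ind t <= 1.
Proof. unfold ind. destruct (Rlt_dec r (sqrt t)); lra. Qed.

Definition sig (c : R) := sqrt (Rmax 0 (r*r - c)).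

Lemma sig_nn c : 0 <= sig c.
Proof. apply sqrt_pos. Qed.

Lemma sig_sq c : sig c * sig c = Rmax 0 (r*r - c).
Proof. unfold sig. apply sqrt_sqrt. apply Rmax_l. Qed.

Definition f0 (c x : R) := phi x * ind (c + x*x).

Lemma f0_out c x : sig c < Rabs x -> f0 c x = phi x.
Proof.
  intros H. unfold f0. rewrite ind_1. ring.
  pose proof (sig_nn c). pose proof (sig_sq c). pose proof (Rmax_r 0 (r*r-c)).
  assert (x * x = Rabs x * Rabs x) by (rewrite <- Rabs_mult; rewrite Rabs_right; nra).
  nra.
Qed.

Lemma f0_in c x : Rabs x < sig c -> f0 c x = 0.
Proof.
  intros H. unfold f0. rewrite ind_0. ring.
  pose proof (sig_nn c). pose proof (sig_sq c). pose proof (Rabs_pos x).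
  assert (x * x = Rabs x * Rabs x) by (rewrite <- Rabs_mult; rewrite Rabs_right; nra).
  assert (0 < Rmax 0 (r*r-c)) by nra.
  unfold Rmax in *. destruct (Rle_dec 0 (r*r-c)); nra.
Qed.

Lemma f0_pieces c a b : a <= - sig c -> sig c <= b ->
  ex_RInt (f0 c) a b /\ @eq R (RInt (f0 c) a b) (RInt phi a b - RInt phi (- sig c) (sig c)).
Proof.
  intros Ha Hb. pose proof (sig_nn c) as Hs. set (s := sig c) in *.
  assert (E1 : ex_RInt (f0 c) a (-s) /\ RInt (f0 c) a (-s) = RInt phi a (-s)).
  { split. apply ex_ext with phi. 2: apply phi_ex.
    intros x Hx. rewrite Rmin_left, Rmax_right in Hx by lra. symmetry; apply f0_out; fold s.
    rewrite Rabs_left by lra. lra.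
    apply RInt_ext_R. intros x Hx. rewrite Rmin_left, Rmax_right in Hx by lra. apply f0_out; fold s.
    rewrite Rabs_left by lra. lra. }
  assert (E2 : ex_RInt (f0 c) (-s) s /\ RInt (f0 c) (-s) s = 0).
  { split. apply ex_ext with (fun _ => 0). 2: apply ex_zero.
    intros x Hx. rewrite Rmin_left, Rmax_right in Hx by lra. symmetry; apply f0_in; fold s.
    apply Rabs_def1; lra.
    rewrite <- (RInt_zero (-s) s).
    apply RInt_ext_R. intros x Hx. rewrite Rmin_left, Rmax_right in Hx by lra. apply f0_in; fold s.
    apply Rabs_def1; lra. }
  assert (E3 : ex_RInt (f0 c) s b /\ RInt (f0 c) s b = RInt phi s b).
  { split. apply ex_ext with phi. 2: apply phi_ex.
    intros x Hx. rewrite Rmin_left, Rmax_right in Hx by lra. symmetry; apply f0_out; fold s.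
    rewrite Rabs_right by lra. lra.
    apply RInt_ext_R. intros x Hx. rewrite Rmin_left, Rmax_right in Hx by lra. apply f0_out; fold s.
    rewrite Rabs_right by lra. lra. }
  destruct E1 as [X1 I1], E2 as [X2 I2], E3 as [X3 I3].
  split. apply ex_chas with (-s); auto. apply ex_chas with s; auto.
  rewrite <- (Chasles_R (f0 c) a (-s) b), <- (Chasles_R (f0 c) (-s) s b); auto.
  2: apply ex_chas with s; auto.
  rewrite <- (Chasles_R phi a (-s) b), <- (Chasles_R phi (-s) s b); try apply phi_ex.
  rewrite I1, I2, I3. ring.
Qed.

Lemma f0_ex c a b : ex_RInt (f0 c) a b.
Proof.
  set (N := Rabs a + Rabs b + sig c).
  pose proof (Rabs_pos a). pose proof (Rabs_pos b). pose proof (sig_nn c).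
  apply ex_sub with N. apply f0_pieces; unfold N; lra. unfold N; lra. unfold N; lra.
Qed.

Definition Phi2 (s : R) := RInt phi (-s) s.

Lemma f0_Imp c : ImpInt (f0 c) (1 - Phi2 (sig c)).
Proof.
  split. apply f0_ex.
  intros eps Heps. destruct phi_Imp as [_ HP]. destruct (HP eps Heps) as [M HM].
  exists (Rmax M (sig c)). intros a b Ha Hb.
  pose proof (Rmax_l M (sig c)). pose proof (Rmax_r M (sig c)).
  destruct (f0_pieces c a b) as [_ E]; try lra. rewrite E. unfold Phi2.
  replace (RInt phi a b - RInt phi (- sig c) (sig c) - (1 - RInt phi (- sig c) (sig c))) with (RInt phi a b - 1) by ring.
  apply HM; lra.
Qed.

Lemma phi_le_half x : phi x <= /2.
Proof.
  unfold phi. assert (2 <= sqrt (2*PI)).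
  { assert (E : sqrt (2*2) = 2) by (apply sqrt_square; lra).
    rewrite <- E at 1. apply sqrt_le_1_alt. pose proof PI2_1. lra. }
  assert (exp (-(x*x)/2) <= 1).
  { rewrite <- exp_0. destruct (Req_dec (-(x*x)/2) 0) as [e|e]. rewrite e; lra.
    left; apply exp_increasing. assert (0 <= x*x) by nra. lra. }
  pose proof (exp_pos (-(x*x)/2)).
  unfold Rdiv. apply Rle_trans with (1 * / sqrt (2*PI)). apply Rmult_le_compat_r. left; apply Rinv_0_lt_compat; lra. lra.
  rewrite Rmult_1_l. apply Rinv_le_contravar; lra.
Qed.

Lemma phi_int_small u v : Rabs (RInt phi u v) <= Rabs (v - u) * /2.
Proof.
  apply (norm_RInt_le_const_abs (V:=R_NormedModule) phi u v). intros. 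
  change (Rabs (phi x) <= /2). rewrite Rabs_right. apply phi_le_half. left; apply phi_pos.
  apply (RInt_correct (V:=R_CompleteNormedModule)), phi_ex.
Qed.

Lemma Phi2_lip s s' : 0 <= s -> 0 <= s' -> Rabs (Phi2 s - Phi2 s') <= Rabs (s - s').
Proof.
  intros Hs Hs'. unfold Phi2.
  pose proof (Chasles_R phi (-s) (-s') s (phi_ex _ _) (phi_ex _ _)).
  pose proof (Chasles_R phi (-s') s' s (phi_ex _ _) (phi_ex _ _)).
  replace (RInt phi (- s) s - RInt phi (- s') s') with (RInt phi (-s) (-s') + RInt phi s' s) by lra.
  pose proof (phi_int_small (-s) (-s')). pose proof (phi_int_small s' s).
  pose proof (Rabs_triang (RInt phi (-s) (-s')) (RInt phi s' s)).
  replace (- s' - - s) with (s - s') in H1 by ring. pose proof (Rabs_pos (s - s')). lra.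
Qed.

Lemma sqrt_hold x y : 0 <= x -> 0 <= y -> Rabs (sqrt x - sqrt y) <= sqrt (Rabs (x - y)).
Proof.
  assert (K : forall x y, 0 <= y -> y <= x -> Rabs (sqrt x - sqrt y) <= sqrt (Rabs (x - y))).
  { intros u v Hv Hvu. pose proof (sqrt_le_1_alt v u Hvu).
    pose proof (sqrt_pos u). pose proof (sqrt_pos v).
    rewrite Rabs_right by lra. rewrite Rabs_right by lra.
    rewrite <- (sqrt_square (sqrt u - sqrt v)) by lra.
    apply sqrt_le_1_alt.
    pose proof (sqrt_sqrt u ltac:(lra)). pose proof (sqrt_sqrt v ltac:(lra)). nra. }
  intros Hx Hy. destruct (Rle_dec y x). apply K; auto.
  rewrite Rabs_minus_sym, (Rabs_minus_sym x). apply K; lra.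
Qed.

Lemma Rmax0_lip u v : Rabs (Rmax 0 u - Rmax 0 v) <= Rabs (u - v).
Proof. unfold Rmax. destruct (Rle_dec 0 u), (Rle_dec 0 v); unfold Rabs;
  repeat destruct Rcase_abs; lra. Qed.

Lemma sig_hold c c' : Rabs (sig c - sig c') <= sqrt (Rabs (c - c')).
Proof.
  unfold sig. eapply Rle_trans. apply sqrt_hold; apply Rmax_l.
  apply sqrt_le_1_alt. eapply Rle_trans. apply Rmax0_lip.
  replace (r*r - c - (r*r - c')) with (c' - c) by ring. rewrite Rabs_minus_sym. lra.
Qed.

Fixpoint V (n : nat) (c : R) : R :=
  match n with
  | O => ind c
  | S m => ILim (fun x => phi x * V m (c + x*x))
  end.

Definition Hold (g : R -> R) := forall c c', Rabs (g c - g c') <= sqrt (Rabs (c - c')).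

Lemma Hold_cont g c : Hold g -> continuity_pt g c.
Proof.
  intros H eps Heps. exists (eps * eps). split. nra.
  intros x [_ Hx]. simpl in *. unfold R_dist in *.
  eapply Rle_lt_trans. apply H.
  rewrite <- (sqrt_square eps) by lra. apply sqrt_lt_1_alt. split. apply Rabs_pos. exact Hx.
Qed.

Lemma V1_val c : V 1 c = 1 - Phi2 (sig c).
Proof.
  simpl. apply (ImpInt_unique (f0 c)). 2: apply f0_Imp.
  apply (ImpInt_exist (f0 c)). apply f0_ex.
  intros x. unfold f0. pose proof (ind_bounds (c+x*x)). pose proof (phi_pos x).
  rewrite Rabs_right by nra. nra.
Qed.

Lemma V1_hold : Hold (V 1).
Proof.
  intros c c'. rewrite !V1_val.
  replace (1 - Phi2 (sig c) - (1 - Phi2 (sig c'))) with (- (Phi2 (sig c) - Phi2 (sig c'))) by ring.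
  rewrite Rabs_Ropp. eapply Rle_trans. apply Phi2_lip; apply sig_nn. apply sig_hold.
Qed.



Lemma V_all n :
  (forall c, 0 <= V n c <= 1) /\
  (forall c a b, ex_RInt (fun x => phi x * V n (c + x*x)) a b) /\
  (forall c, ImpInt (fun x => phi x * V n (c + x*x)) (V (S n) c)) /\
  ((n >= 1)%nat -> Hold (V n)).
Proof.
  induction n as [|n IH].
  - assert (Hex : forall c a b, ex_RInt (fun x => phi x * V 0 (c + x*x)) a b) by (intros; apply f0_ex).
    split; [|split; [exact Hex|split]].
    + intros; apply ind_bounds.
    + intros c. apply ImpInt_exist. apply Hex. intros x. simpl.
      pose proof (ind_bounds (c+x*x)). pose proof (phi_pos x). rewrite Rabs_right by nra. nra.
    + intros; lia.
  - destruct IH as [Hb [Hex [HI HH]]].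
    assert (Bn : forall c, 0 <= V (S n) c <= 1).
    { intros c. split.
      - apply (ImpInt_le (fun _ => 0) (fun x => phi x * V n (c + x*x))).
        assert (Z: ImpInt (fun x => 0 * phi x) (0*1)) by (apply ImpInt_scal, phi_Imp).
        rewrite Rmult_0_l in Z. apply ImpInt_ext with (fun x => 0 * phi x). intros; ring. exact Z.
        apply HI. intros x. pose proof (phi_pos x). pose proof (Hb (c + x*x)). nra.
      - apply (ImpInt_le (fun x => phi x * V n (c + x*x)) phi). apply HI. apply phi_Imp.
        intros x. pose proof (phi_pos x). pose proof (Hb (c + x*x)). nra. }
    assert (Hn : Hold (V (S n))).
    { destruct n as [|m]. apply V1_hold.
      pose proof (HH ltac:(lia)) as Hm.
      intros c c'.
      set (q := sqrt (Rabs (c - c'))).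
      assert (Hq : ImpInt (fun x => q * phi x) (q * 1)) by (apply ImpInt_scal, phi_Imp).
      assert (Hd : ImpInt (fun x => phi x * V (S m) (c + x*x) + -1 * (phi x * V (S m) (c' + x*x)))
                     (V (S (S m)) c + -1 * V (S (S m)) c')) by (apply ImpInt_plus; [|apply ImpInt_scal]; apply HI).
      assert (Hd2 : ImpInt (fun x => -1 * (phi x * V (S m) (c + x*x) + -1 * (phi x * V (S m) (c' + x*x))))
                     (-1 * (V (S (S m)) c + -1 * V (S (S m)) c'))) by (apply ImpInt_scal, Hd).
      assert (Pt : forall x, Rabs (phi x * V (S m) (c + x*x) + -1 * (phi x * V (S m) (c' + x*x))) <= q * phi x).
      { intros x. replace (phi x * V (S m) (c + x*x) + -1 * (phi x * V (S m) (c' + x*x))) with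
          (phi x * (V (S m) (c + x*x) - V (S m) (c' + x*x))) by ring.
        rewrite Rabs_mult, Rabs_right by (left; apply phi_pos).
        rewrite Rmult_comm. apply Rmult_le_compat_r. left; apply phi_pos.
        unfold q. replace (c - c') with ((c + x*x) - (c' + x*x)) by ring. apply Hm. }
      apply Rabs_le. split.
      + pose proof (ImpInt_le _ _ _ _ Hd2 Hq) as L. lapply L.
        intros; lra. intros x. pose proof (Pt x). apply Rabs_le_inv in H. lra.
      + pose proof (ImpInt_le _ _ _ _ Hd Hq) as L. lapply L.
        intros; lra. intros x. pose proof (Pt x). apply Rabs_le_inv in H. lra. }
    assert (Hex' : forall c a b, ex_RInt (fun x => phi x * V (S n) (c + x*x)) a b).
    { intros c a b. apply exc. intros z _. apply cpt_cont.
      apply continuity_pt_mult. apply continuity_pt_filterlim, phi_cont.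
      change (continuity_pt (comp (V (S n)) (fun x => c + x*x)) z).
      apply (continuity_pt_comp (fun x => c + x*x) (V (S n))).
      apply continuity_pt_filterlim. apply (exd_cont (fun x => c + x*x)). auto_derive; auto.
      apply Hold_cont, Hn. }
    split; [exact Bn|split; [exact Hex'|split]].
    + intros c. apply ImpInt_exist. apply Hex'. intros x.
      pose proof (Bn (c+x*x)). pose proof (phi_pos x). rewrite Rabs_right by nra. nra.
    + intros _. exact Hn.
Qed.
End WithR.


Lemma imp_to_improper f l : ImpInt f l -> improper_int f l.
Proof.
  intros [H1 H2]. split.
  - intros a b. constructor. apply ex_RInt_Reals_0, H1.
  - intros eps Heps. destruct (H2 eps Heps) as [M HM]. exists M. intros a b Ha Hb.
    exists (ex_RInt_Reals_0 f a b (H1 a b)). rewrite <- RInt_Reals. apply HM; auto.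
Qed.

Lemma iter_int_ext n : forall f g l, (forall v, f v = g v) -> iter_int n f l -> iter_int n g l.
Proof.
  induction n as [|n IH]; intros f g l E H; simpl in *.
  - rewrite <- E; auto.
  - destruct H as [h [H1 H2]]. exists h. split; auto.
    intros x. apply IH with (fun v => f (x :: v)); auto.
Qed.

Lemma s2pi_pos : 0 < sqrt (2*PI).
Proof. apply sqrt_lt_R0. pose proof PI_RGT_0. lra. Qed.

Lemma iter_main r (hr : 0 <= r) n : forall c A f,
  (forall v, f v = if Rlt_dec r (sqrt (c + sqnorm v)) then A * exp (-(c + sqnorm v)/2) else 0) ->
  iter_int n f (A * exp (-c/2) * sqrt (2*PI) ^ n * V r n c).
Proof.
  induction n as [|n IH]; intros c A f Hf.
  - simpl. rewrite Hf. simpl. unfold ind. rewrite Rplus_0_r.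
    destruct (Rlt_dec r (sqrt c)); ring.
  - simpl.
    exists (fun x => A * exp (-(c + x*x)/2) * sqrt (2*PI) ^ n * V r n (c + x*x)).
    split.
    + intros x. apply IH. intros v. rewrite Hf. simpl. rewrite Rplus_assoc. reflexivity.
    + apply imp_to_improper.
      destruct (V_all r hr n) as [_ [_ [HI _]]].
      pose proof (ImpInt_scal _ _ (A * exp (- c / 2) * (sqrt (2 * PI) * sqrt (2 * PI) ^ n)) (HI c)) as H.
      simpl in H.
      eapply ImpInt_ext. 2: exact H.
      intros x. simpl. unfold phi.
      replace (-(c + x*x)/2) with (-c/2 + (-(x*x)/2)) by field. rewrite exp_plus.
      pose proof s2pi_pos. field. lra.
Qed.

Lemma tail_is_V d t0 : 0 <= t0 -> gauss_tail d (sqrt t0) (V (sqrt t0) d 0).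
Proof.
  intros H. unfold gauss_tail.
  pose proof (sqrt_pos t0) as Hr.
  pose proof s2pi_pos as Hs.
  assert (E : V (sqrt t0) d 0 = (/ sqrt (2*PI) ^ d) * exp (-0/2) * sqrt (2*PI) ^ d * V (sqrt t0) d 0).
  { replace (-0/2) with 0 by field. rewrite exp_0. field. apply pow_nonzero. lra. }
  rewrite E. apply iter_main. auto.
  intros v. rewrite Rplus_0_l. unfold enorm, gauss_density.
  destruct (Rlt_dec (sqrt t0) (sqrt (sqnorm v))); auto. unfold Rdiv. ring.
Qed.


Lemma exp_mult_nat n z : exp (INR n * z) = exp z ^ n.
Proof.
  induction n as [|n IH]. simpl. rewrite Rmult_0_l. apply exp_0.
  rewrite S_INR. replace ((INR n + 1) * z) with (INR n * z + z) by ring.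
  rewrite exp_plus, IH. simpl. ring.
Qed.

Lemma exp_big y : 0 <= y -> y ^ 8 / 16777216 <= exp y.
Proof.
  intros Hy. replace y with (INR 8 * (y / 8)) at 2 by (simpl; field).
  rewrite exp_mult_nat.
  replace (y ^ 8 / 16777216) with ((y/8)^8) by (simpl; field).
  apply pow_incr. split. lra. pose proof (exp_ineq1_le (y/8)). lra.
Qed.

Definition Cst := 256 * 16777216.

Lemma phi_le_exp x : phi x <= exp (-(x*x)/2).
Proof.
  unfold phi. assert (1 <= sqrt (2*PI)).
  { rewrite <- sqrt_1. apply sqrt_le_1_alt. pose proof PI2_1. lra. }
  pose proof (exp_pos (-(x*x)/2)). unfold Rdiv at 1.
  rewrite <- (Rmult_1_r (exp _)) at 2. apply Rmult_le_compat_l. lra.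
  rewrite <- Rinv_1. apply Rinv_le_contravar; lra.
Qed.

Lemma tail_bound_ x j : (j <= 7)%nat -> 1 <= Rabs x -> Rabs (x ^ j * phi x) <= Cst / Rabs x.
Proof.
  intros Hj Hx. set (a := Rabs x) in *.
  rewrite Rabs_mult, <- RPow_abs, (Rabs_right (phi x)) by (left; apply phi_pos). fold a.
  assert (A1 : a ^ j <= a ^ 7) by (apply Rle_pow; auto).
  assert (Hxx : x * x = a * a) by (unfold a; rewrite <- Rabs_mult, Rabs_right; nra).
  assert (A2 : exp (-(x*x)/2) <= Cst / (a ^ 16)).
  { pose proof (exp_big (x*x/2) ltac:(nra)).
    rewrite Hxx in *. replace (- (a*a)/2) with (- (a*a/2)) by field. rewrite exp_Ropp.
    assert (P16 : 0 < a ^ 16) by (apply pow_lt; lra).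
    replace ((a*a/2)^8) with (a^16 / 256) in H by (simpl; field).
    unfold Cst. apply Rle_trans with (/ (a ^ 16 / 256 / 16777216)).
    apply Rinv_le_contravar. apply Rdiv_lt_0_compat; lra. exact H.
    right. field. lra. }
  assert (P7 : 0 < a ^ 7) by (apply pow_lt; lra).
  pose proof (phi_le_exp x). pose proof (phi_pos x).
  apply Rle_trans with (a ^ 7 * (Cst / a ^ 16)).
  apply Rmult_le_compat; try lra. apply pow_le; lra.
  assert (a ^ 16 = a ^ 7 * a ^ 8 * a) by (rewrite <- !pow_add; simpl; ring).
  rewrite H1. assert (1 <= a ^ 8) by (apply pow_R1_Rle; lra).
  replace (a ^ 7 * (Cst / (a ^ 7 * a ^ 8 * a))) with (Cst / (a ^ 8 * a)) by (field; assert (0 < a ^ 8) by (apply pow_lt; lra); repeat split; lra).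
  unfold Rdiv. apply Rmult_le_compat_l. unfold Cst; lra.
  apply Rinv_le_contravar. lra. nra.
Qed.

Definition Hb (m : nat) (x : R) := - (x ^ (S m)) * phi x.

Lemma Hb_der m (x:R) : is_derive (Hb m) x (phi x * x ^ (S (S m)) + - INR (S m) * (phi x * x ^ m)).
Proof.
  unfold Hb, phi. auto_derive. auto.
  destruct m; simpl; unfold Rdiv; field; apply Rgt_not_eq, s2pi_pos.
Qed.

Lemma pm_ex m a b : ex_RInt (fun x => phi x * x ^ m) a b.
Proof. apply exc. intros. apply exd_cont. unfold phi. auto_derive. auto. Qed.

Lemma Hb_int m a b : RInt (fun x => phi x * x ^ (S (S m))) a b =
   Hb m b - Hb m a + INR (S m) * RInt (fun x => phi x * x ^ m) a b.
Proof.
  assert (E : RInt (fun x => phi x * x ^ (S (S m)) + - INR (S m) * (phi x * x ^ m)) a b = Hb m b - Hb m a).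
  { apply is_RInt_unique.
    apply (is_RInt_derive (V:=R_CompleteNormedModule) (Hb m)).
    intros; apply Hb_der.
    intros; apply exd_cont. unfold phi. auto_derive. auto. }
  rewrite RInt_plus_R in E. 2: apply pm_ex. 2: apply ex_scal_R, pm_ex.
  rewrite RInt_scal_R in E by apply pm_ex. lra.
Qed.

Lemma ibp m (Hm : (m <= 6)%nat) L : ImpInt (fun x => phi x * x ^ m) L ->
  ImpInt (fun x => phi x * x ^ (S (S m))) (INR (S m) * L).
Proof.
  intros [H1 H2]. split. intros; apply pm_ex.
  intros eps Heps.
  assert (Hs : 0 < INR (S m)) by (apply lt_0_INR; lia).
  destruct (H2 (eps / (2 * INR (S m)))) as [M1 HM1]. apply Rdiv_lt_0_compat; lra.
  set (M2 := Rmax 1 (4 * Cst / eps)).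
  assert (HC : 0 < Cst) by (unfold Cst; lra).
  exists (Rmax M1 M2). intros a b Ha Hb'.
  pose proof (Rmax_l M1 M2). pose proof (Rmax_r M1 M2).
  pose proof (Rmax_l 1 (4 * Cst / eps)). pose proof (Rmax_r 1 (4 * Cst / eps)).
  fold M2 in H, H0, H3, H4.
  assert (TB : forall x, M2 <= Rabs x -> Rabs (Hb m x) <= eps / 4).
  { intros x Hx. unfold Hb. rewrite Ropp_mult_distr_l_reverse, Rabs_Ropp.
    eapply Rle_trans. apply tail_bound_. lia. lra.
    apply Rle_trans with (Cst / M2).
    unfold Rdiv. apply Rmult_le_compat_l. lra. apply Rinv_le_contravar; lra.
    apply Rle_trans with (Cst / (4 * Cst / eps)).
    unfold Rdiv. apply Rmult_le_compat_l. lra. apply Rinv_le_contravar.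
    apply Rdiv_lt_0_compat; lra. lra.
    right. field. lra. }
  pose proof (TB a ltac:(rewrite Rabs_left1; lra)) as Ta.
  pose proof (TB b ltac:(rewrite Rabs_right; lra)) as Tb.
  rewrite Hb_int.
  pose proof (HM1 a b ltac:(lra) ltac:(lra)) as P.
  apply Rabs_le_inv in Ta. apply Rabs_le_inv in Tb. apply Rabs_def2 in P.
  assert (Q : Rabs (INR (S m) * (RInt (fun x => phi x * x ^ m) a b - L)) < eps / 2).
  { rewrite Rabs_mult, Rabs_right by lra.
    apply Rlt_le_trans with (INR (S m) * (eps / (2 * INR (S m)))).
    apply Rmult_lt_compat_l. lra. apply Rabs_def1; lra. right; field; lra. }
  apply Rabs_def2 in Q. apply Rabs_def1; lra.
Qed.

Lemma mom0 : ImpInt (fun x => phi x * x ^ 0) 1.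
Proof. apply ImpInt_ext with phi. intros; simpl; ring. apply phi_Imp. Qed.

Lemma mom2 : ImpInt (fun x => phi x * x ^ 2) 1.
Proof. replace 1 with (INR 1 * 1) by (simpl; ring). apply ibp. lia. apply mom0. Qed.

Lemma mom4 : ImpInt (fun x => phi x * x ^ 4) 3.
Proof. replace 3 with (INR 3 * 1) by (simpl; ring). apply ibp. lia. apply mom2. Qed.

Lemma mom6 : ImpInt (fun x => phi x * x ^ 6) 15.
Proof. replace 15 with (INR 5 * 3) by (simpl; ring). apply ibp. lia. apply mom4. Qed.

Lemma mom8 : ImpInt (fun x => phi x * x ^ 8) 105.
Proof. replace 105 with (INR 7 * 15) by (simpl; ring). apply ibp. lia. apply mom6. Qed.

Lemma poly_int e0 e1 e2 e3 e4 :
  ImpInt (fun x => phi x * (e0 + e1 * x^2 + e2 * x^4 + e3 * x^6 + e4 * x^8))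
    (e0 + e1 + 3 * e2 + 15 * e3 + 105 * e4).
Proof.
  pose proof (ImpInt_scal _ _ e0 mom0) as A0.
  pose proof (ImpInt_scal _ _ e1 mom2) as A1.
  pose proof (ImpInt_scal _ _ e2 mom4) as A2.
  pose proof (ImpInt_scal _ _ e3 mom6) as A3.
  pose proof (ImpInt_scal _ _ e4 mom8) as A4.
  pose proof (ImpInt_plus _ _ _ _ (ImpInt_plus _ _ _ _ (ImpInt_plus _ _ _ _ (ImpInt_plus _ _ _ _ A0 A1) A2) A3) A4) as S.
  eapply ImpInt_ext. 2: { replace (e0 + e1 + 3 * e2 + 15 * e3 + 105 * e4) with
     (e0 * 1 + e1 * 1 + e2 * 3 + e3 * 15 + e4 * 105) by ring. exact S. }
  intros x. simpl. ring.
Qed.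


Definition m1 N y := y + N.
Definition m2 N y := y*y + 2*y*N + N*(N+2).
Definition m3 N y := y*y*y + 3*y*y*N + 3*y*N*(N+2) + N*(N+2)*(N+4).
Definition m4 N y := y*y*y*y + 4*y*y*y*N + 6*y*y*N*(N+2) + 4*y*N*(N+2)*(N+4) + N*(N+2)*(N+4)*(N+6).

Definition Pn (a1 a2 a3 a4 t0 : R) (n : nat) (c : R) :=
  a1 * m1 (INR n) (c - t0) + a2 * m2 (INR n) (c - t0) + a3 * m3 (INR n) (c - t0) + a4 * m4 (INR n) (c - t0).

Lemma Pn_step a1 a2 a3 a4 t0 n c :
  ImpInt (fun x => phi x * Pn a1 a2 a3 a4 t0 n (c + x*x)) (Pn a1 a2 a3 a4 t0 (S n) c).
Proof.
  set (N := INR n). set (y := c - t0).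
  set (e0 := a1 * m1 N y + a2 * m2 N y + a3 * m3 N y + a4 * m4 N y).
  set (e1 := a1 + 2 * a2 * m1 N y + 3 * a3 * m2 N y + 4 * a4 * m3 N y).
  set (e2 := a2 + 3 * a3 * m1 N y + 6 * a4 * m2 N y).
  set (e3 := a3 + 4 * a4 * m1 N y).
  replace (Pn a1 a2 a3 a4 t0 (S n) c) with (e0 + e1 + 3 * e2 + 15 * e3 + 105 * a4).
  2:{ unfold Pn, e0, e1, e2, e3, N, y. rewrite S_INR. unfold m1, m2, m3, m4. ring. }
  eapply ImpInt_ext. 2: apply (poly_int e0 e1 e2 e3 a4).
  intros x. f_equal. unfold Pn, e0, e1, e2, e3, N, y. unfold m1, m2, m3, m4. simpl. ring.
Qed.

Lemma Pn_lower a1 a2 a3 a4 t0 r (hr : 0 <= r) :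
  (forall t, Pn a1 a2 a3 a4 t0 0 t <= ind r t) ->
  forall n c, Pn a1 a2 a3 a4 t0 n c <= V r n c.
Proof.
  intros H0 n. induction n as [|n IH]; intros c.
  - apply H0.
  - destruct (V_all r hr n) as [_ [_ [HI _]]].
    apply (ImpInt_le _ _ _ _ (Pn_step a1 a2 a3 a4 t0 n c) (HI c)).
    intros x. apply Rmult_le_compat_l. left; apply phi_pos. apply IH.
Qed.

Lemma shape_bound u : 0 <= u <= 9/2 -> u * (9/2 - u) * ((u + 3/2) * (u + 3/2)) <= 125.
Proof.
  intros Hu.
  assert (S0 : 0 <= (u - 9/4) * (u - 9/4)) by apply Rle_0_sqr.
  assert (P0 : 0 <= u * (9/2 - u)) by (apply Rmult_le_pos; lra).
  destruct (Rle_dec u 3).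
  - assert (A : u * (9/2 - u) <= 81/16) by nra.
    assert (B : (u + 3/2) * (u + 3/2) <= 81/4) by nra.
    assert (0 <= (u + 3/2) * (u + 3/2)) by apply Rle_0_sqr.
    apply Rle_trans with (81/16 * (81/4)). apply Rmult_le_compat; lra. lra.
  - destruct (Rle_dec u (15/4)).
    + assert (A : u * (9/2 - u) <= 9/2) by nra.
      assert (B : (u + 3/2) * (u + 3/2) <= 441/16) by nra.
      assert (0 <= (u + 3/2) * (u + 3/2)) by apply Rle_0_sqr.
      apply Rle_trans with (9/2 * (441/16)). apply Rmult_le_compat; lra. lra.
    + assert (A : u * (9/2 - u) <= 45/16) by nra.
      assert (B : (u + 3/2) * (u + 3/2) <= 36) by nra.
      assert (0 <= (u + 3/2) * (u + 3/2)) by apply Rle_0_sqr.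
      apply Rle_trans with (45/16 * 36). apply Rmult_le_compat; lra. lra.
Qed.

Definition al1 k := / 125 * (81/8) / k.
Definition al2 k := / 125 * (45/4) / (k*k).
Definition al3 k := / 125 * (3/2) / (k*k*k).
Definition al4 k := - / 125 / (k*k*k*k).

Lemma base_ok t0 k : 0 <= t0 -> 0 < k ->
  forall t, Pn (al1 k) (al2 k) (al3 k) (al4 k) t0 0 t <= ind (sqrt t0) t.
Proof.
  intros Ht0 Hk t.
  set (u := (t - t0) / k).
  assert (E : Pn (al1 k) (al2 k) (al3 k) (al4 k) t0 0 t = / 125 * (u * (9/2 - u) * ((u + 3/2) * (u + 3/2)))).
  { unfold Pn, al1, al2, al3, al4, u, m1, m2, m3, m4. change (INR 0) with 0. field. lra. }
  rewrite E.
  assert (Hr : sqrt t0 * sqrt t0 = t0) by (apply sqrt_sqrt; auto).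
  assert (Hsq : 0 <= (u + 3/2) * (u + 3/2)) by apply Rle_0_sqr.
  destruct (Rle_dec t t0) as [Hle|Hlt].
  - rewrite (ind_0 (sqrt t0) (sqrt_pos t0)) by lra.
    assert (u <= 0) by (unfold u; apply Rmult_le_reg_r with k; auto; unfold Rdiv; rewrite Rmult_assoc, Rinv_l by lra; lra).
    assert (u * (9/2 - u) <= 0) by nra.
    assert (u * (9/2 - u) * ((u + 3/2) * (u + 3/2)) <= 0) by nra. lra.
  - rewrite (ind_1 (sqrt t0) (sqrt_pos t0)) by lra.
    assert (0 < u) by (unfold u; apply Rdiv_lt_0_compat; lra).
    destruct (Rle_dec u (9/2)).
    + pose proof (shape_bound u ltac:(lra)). lra.
    + assert (u * (9/2 - u) <= 0) by nra.
      assert (u * (9/2 - u) * ((u + 3/2) * (u + 3/2)) <= 0) by nra. lra.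
Qed.

Theorem lemma1 (d : nat) (hd : (2 <= d)%nat) :
  exists p1 p2 : R,
    gauss_tail d (sqrt (INR d)) p1 /\ p1 >= 1 / 33 /\
    gauss_tail d (sqrt (INR d + 2)) p2 /\ p2 >= 1 / 397.
Proof.
  assert (HD : 2 <= INR d) by (apply le_INR in hd; simpl in hd; lra).
  set (k := sqrt (2 * INR d)).
  assert (Hkk : k * k = 2 * INR d) by (apply sqrt_sqrt; lra).
  assert (Hk : 2 <= k).
  { unfold k. assert (E : sqrt (2*2) = 2) by (apply sqrt_square; lra).
    rewrite <- E at 1. apply sqrt_le_1_alt. lra. }
  assert (HN : INR d = k * k / 2) by lra.
  set (w := / k).
  assert (Hw : 0 < w <= 1/2).
  { unfold w. split. apply Rinv_0_lt_compat; lra.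
    replace (1/2) with (/2) by field. apply Rinv_le_contravar; lra. }
  exists (V (sqrt (INR d)) d 0), (V (sqrt (INR d + 2)) d 0).
  split; [apply tail_is_V; lra|split; [|split; [apply tail_is_V; lra|]]].
  - apply Rle_ge. eapply Rle_trans.
    2: apply (Pn_lower _ _ _ _ (INR d) _ (sqrt_pos _) (base_ok (INR d) k ltac:(lra) ltac:(lra)) d 0).
    assert (E : Pn (al1 k) (al2 k) (al3 k) (al4 k) (INR d) d 0 = / 125 * (33/4 + 6 * w - 24 * (w * w))).
    { unfold Pn, al1, al2, al3, al4, m1, m2, m3, m4, w. rewrite HN. field. lra. }
    rewrite E.
    assert (6 * w - 24 * (w*w) >= -3) by nra. lra.
  - apply Rle_ge. eapply Rle_trans.
    2: apply (Pn_lower _ _ _ _ (INR d + 2) _ (sqrt_pos _) (base_ok (INR d + 2) k ltac:(lra) ltac:(lra)) d 0).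
    assert (E : Pn (al1 k) (al2 k) (al3 k) (al4 k) (INR d + 2) d 0 =
       / 125 * (33/4 - 93/4 * w + 29 * (w*w) - 12 * (w*w*w) - 16 * (w*w*w*w))).
    { unfold Pn, al1, al2, al3, al4, m1, m2, m3, m4, w. rewrite HN. field. lra. }
    rewrite E.
    assert (w*w*w <= w*w/2) by nra.
    assert (w*w*w*w <= w*w/4) by nra.
    assert (33/4 - 93/4 * w + 19 * (w*w) >= 11/8) by nra.
    lra.
Qed.
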